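(* Let $X$ be a nonempty set, $F:X\rightrightarrows Y$ with $F(x)\in\mathcal P^0_{\mp C}(Y)$ for all $x$, $\mp C$-closed and $\mp C$-bounded valued, let $e\in-\mathrm{int}(C)$, and assume $v_e(F(x))\neq v_e(F(y))$ for all $x,y\in X$ with $x\neq y$. If $x_0\in X$ is a maximal (resp. minimal) solution of the vector problem of maximizing (resp. minimizing) $v_e(F(x))$ over $x\in X$, then $x_0$ is an $s$-maximal (resp. $s$-minimal) solution of $(s\text{-}SOP)$.
   Context: $Y$ is a real topological linear space and $C\subset Y$ is a convex, closed, pointed cone with nonempty interior. $\mathbb R^2$ is ordered by $\mathbb R^2_+$. $\mathcal P^0_{\mp C}(Y)$ is the family of nonempty $A\subset Y$ with $A+C\neq Y$ and $A-C\neq Y$. $C$-closed: $A+C$ closed; $C$-bounded: for every neighborhood $U$ of $0$ there is $t>0$ with $A\subset tU+C$; $\mp C$-closed/bounded: holds for $C$ and $-C$. $A\preceq^s B$ iff $B\subset A+C$ and $A\subset B-C$. $x_0$ is an $s$-maximal (minimal) solution of $(s\text{-}SOP)$ if for every $x\in X$, $F(x_0)\preceq^sF(x)$ implies $F(x)\preceq^sF(x_0)$ (resp. $F(x)\preceq^sF(x_0)$ implies $F(x_0)\preceq^sF(x)$). For $e\in-\mathrm{int}(C)$: $\phi_{e,A}(y)=\inf\{t\in\mathbb R: y\in te+A+C\}$; $G^\ell_e(A,B)=\sup_{b\in B}\phi_{e,A}(b)$; $G^u_e(B,A):=-G^\ell_e(-B,-A)$; $v_e(A)=\big(-G^\ell_e(\{0\},A),\,G^u_e(A,\{0\})\big)$.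 For $f:X\to\mathbb R^2$, $\bar x$ is a maximal solution of $\max f$ if there is no $x$ with $f(\bar x)\le_{\mathbb R^2_+}f(x)$, $f(x)\ne f(\bar x)$; a minimal solution of $\min f$ if there is no $x$ with $f(x)\le_{\mathbb R^2_+}f(\bar x)$, $f(x)\ne f(\bar x)$. *)

(* Defs.v *)
From Stdlib Require Import Reals Classical ClassicalEpsilon.
Open Scope R_scope.

Record TVS := {
  carrier :> Type;
  vzero : carrier;
  vadd : carrier -> carrier -> carrier;
  vopp : carrier -> carrier;
  vscal : R -> carrier -> carrier;
  vadd_assoc : forall x y z, vadd x (vadd y z) = vadd (vadd x y) z;
  vadd_comm : forall x y, vadd x y = vadd y x;
  vadd_0 : forall x, vadd x vzero = x;
  vadd_opp : forall x, vadd x (vopp x) = vzero;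
  vscal_1 : forall x, vscal 1 x = x;
  vscal_assoc : forall a b x, vscal a (vscal b x) = vscal (a * b) x;
  vscal_distr_v : forall a x y, vscal a (vadd x y) = vadd (vscal a x) (vscal a y);
  vscal_distr_s : forall a b x, vscal (a + b) x = vadd (vscal a x) (vscal b x);
  vopen : (carrier -> Prop) -> Prop;
  vopen_full : vopen (fun _ => True);
  vopen_empty : vopen (fun _ => False);
  vopen_inter : forall U V, vopen U -> vopen V -> vopen (fun x => U x /\ V x);
  vopen_union : forall (I : Type) (U : I -> carrier -> Prop),
      (forall i, vopen (U i)) -> vopen (fun x => exists i, U i x);
  vadd_cont : forall U x y, vopen U -> U (vadd x y) ->
      exists V W, vopen V /\ vopen W /\ V x /\ W y /\
        forall x' y', V x' -> W y' -> U (vadd x' y');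
  vscal_cont : forall U r x, vopen U -> U (vscal r x) ->
      exists d V, 0 < d /\ vopen V /\ V x /\
        forall s x', Rabs (s - r) < d -> V x' -> U (vscal s x')
}.

Arguments vzero {_}.

Section Sets.
Variable Y : TVS.
Definition vset := Y -> Prop.

Definition set_eq (A B : vset) := forall y, A y <-> B y.
Definition vsubset (A B : vset) := forall y, A y -> B y.
Definition msum (A B : vset) : vset :=
  fun y => exists a b, A a /\ B b /\ y = vadd Y a b.
Definition setopp (A : vset) : vset := fun y => A (vopp Y y).
Definition sscal (t : R) (A : vset) : vset :=
  fun y => exists a, A a /\ y = vscal Y t a.
Definition sing (y0 : Y) : vset := fun y => y = y0.
Definition full_set : vset := fun _ => True.

Definition vclosed (A : vset) := vopen Y (fun y => ~ A y).
Definition vinterior (A : vset) : vset :=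
  fun y => exists U, vopen Y U /\ U y /\ vsubset U A.
Definition nbhd0 (U : vset) := exists V, vopen Y V /\ V vzero /\ vsubset V U.

Definition is_convex (C : vset) := forall x y l, 0 <= l <= 1 -> C x -> C y ->
  C (vadd Y (vscal Y l x) (vscal Y (1 - l) y)).
Definition is_cone (C : vset) := forall l x, 0 <= l -> C x -> C (vscal Y l x).
Definition is_pointed (C : vset) := set_eq (fun y => C y /\ setopp C y) (sing vzero).

Definition good_cone (C : vset) :=
  is_cone C /\ is_convex C /\ vclosed C /\ is_pointed C /\ exists y, vinterior C y.

Definition P0 (C A : vset) :=
  (exists a, A a) /\ ~ set_eq (msum A C) full_set /\ ~ set_eq (msum A (setopp C)) full_set.
Definition C_closed (C A : vset) := vclosed (msum A C).
Definition C_bounded (C A : vset) :=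
  forall U, nbhd0 U -> exists t, 0 < t /\ vsubset A (msum (sscal t U) C).
Definition mpC_closed (C A : vset) := C_closed C A /\ C_closed (setopp C) A.
Definition mpC_bounded (C A : vset) := C_bounded C A /\ C_bounded (setopp C) A.

Definition s_le (C A B : vset) := vsubset B (msum A C) /\ vsubset A (msum B (setopp C)).
End Sets.

Inductive ER := Fin (r : R) | PInf | MInf.

Definition ER_le (x y : ER) : Prop :=
  match x, y with
  | MInf, _ => True
  | _, PInf => True
  | Fin a, Fin b => a <= b
  | _, _ => False
  end.

Definition ER_opp (x : ER) : ER :=
  match x with Fin a => Fin (- a) | PInf => MInf | MInf => PInf end.

Definition ER_is_sup (S : ER -> Prop) (s : ER) :=
  (forall x, S x -> ER_le x s) /\ (forall u, (forall x, S x -> ER_le x u) -> ER_le s u).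

(* least upper bound in the complete lattice ER (sup of empty set = MInf) *)
Definition ER_sup (S : ER -> Prop) : ER :=
  epsilon (inhabits PInf) (fun s => ER_is_sup S s).
Definition ER_inf (S : ER -> Prop) : ER :=
  ER_opp (ER_sup (fun x => S (ER_opp x))).

Section Scal.
Variable Y : TVS.
Definition phi (C : vset Y) (e : Y) (A : vset Y) (y : Y) : ER :=
  ER_inf (fun x => exists t, x = Fin t /\ msum Y (msum Y (sing Y (vscal Y t e)) A) C y).
Definition Gl (C : vset Y) (e : Y) (A B : vset Y) : ER :=
  ER_sup (fun x => exists b, B b /\ x = phi C e A b).
Definition Gu (C : vset Y) (e : Y) (B A : vset Y) : ER :=
  ER_opp (Gl C e (setopp Y B) (setopp Y A)).
Definition ve (C : vset Y) (e : Y) (A : vset Y) : ER * ER :=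
  (ER_opp (Gl C e (sing Y vzero) A), Gu C e A (sing Y vzero)).
End Scal.

Definition le2 (p q : ER * ER) := ER_le (fst p) (fst q) /\ ER_le (snd p) (snd q).

Definition vec_maximal {X : Type} (f : X -> ER * ER) (x0 : X) :=
  ~ exists x, le2 (f x0) (f x) /\ f x <> f x0.
Definition vec_minimal {X : Type} (f : X -> ER * ER) (x0 : X) :=
  ~ exists x, le2 (f x) (f x0) /\ f x <> f x0.

Definition s_maximal {X : Type} {Y : TVS} (C : vset Y) (F : X -> vset Y) (x0 : X) :=
  forall x, s_le Y C (F x0) (F x) -> s_le Y C (F x) (F x0).
Definition s_minimal {X : Type} {Y : TVS} (C : vset Y) (F : X -> vset Y) (x0 : X) :=
  forall x, s_le Y C (F x) (F x0) -> s_le Y C (F x0) (F x).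

(* Main.v *)
Require Import Defs.
From Stdlib Require Import Reals.
From Stdlib Require Import Classical ClassicalEpsilon Lra.
Open Scope R_scope.

Lemma vcancel (Y:TVS) (a x y : Y) : vadd Y a x = vadd Y a y -> x = y.
Proof.
  intro H.
  assert (E: forall z:Y, vadd Y (vopp Y a) (vadd Y a z) = z).
  { intro z. rewrite vadd_assoc, (vadd_comm Y (vopp Y a) a), vadd_opp, vadd_comm, vadd_0. reflexivity. }
  rewrite <- (E x), <- (E y), H. reflexivity.
Qed.

Lemma vACl (Y:TVS) (a b c : Y) : vadd Y (vadd Y a b) c = vadd Y (vadd Y a c) b.
Proof. rewrite <- vadd_assoc, (vadd_comm Y b c), vadd_assoc. reflexivity. Qed.

Lemma opp_opp (Y:TVS) (x:Y) : vopp Y (vopp Y x) = x.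
Proof.
  apply (vcancel Y (vopp Y x)). rewrite vadd_opp, vadd_comm, vadd_opp. reflexivity.
Qed.

Lemma opp_add (Y:TVS) (a b:Y) : vopp Y (vadd Y a b) = vadd Y (vopp Y a) (vopp Y b).
Proof.
  apply (vcancel Y (vadd Y a b)). rewrite vadd_opp.
  rewrite vadd_assoc, (vACl Y a b (vopp Y a)), vadd_opp, (vadd_comm Y vzero b), vadd_0, vadd_opp. reflexivity.
Qed.

Lemma vscal0 (Y:TVS) (x:Y) : vscal Y 0 x = vzero.
Proof.
  apply (vcancel Y (vscal Y 0 x)). rewrite <- vscal_distr_s, Rplus_0_r, vadd_0. reflexivity.
Qed.

Lemma Cadd (Y:TVS) (C : vset Y) a b : is_cone Y C -> is_convex Y C -> C a -> C b -> C (vadd Y a b).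
Proof.
  intros Hc Hv Ha Hb.
  assert (H := Hv a b (1/2) ltac:(lra) Ha Hb).
  assert (H2 := Hc 2 _ ltac:(lra) H).
  replace (vadd Y a b) with (vscal Y 2 (vadd Y (vscal Y (1/2) a) (vscal Y (1-1/2) b))); auto.
  rewrite vscal_distr_v, !vscal_assoc.
  replace (2*(1/2)) with 1 by field. replace (2*(1-1/2)) with 1 by field.
  rewrite !vscal_1. reflexivity.
Qed.

Lemma C0 (Y:TVS) (C : vset Y) : good_cone Y C -> C vzero.
Proof.
  intros [Hc [_ [_ [_ [y [U [_ [Uy HU]]]]]]]].
  rewrite <- (vscal0 Y y). apply Hc; [lra|]. apply HU; exact Uy.
Qed.

Lemma ER_le_refl x : ER_le x x.
Proof. destruct x; simpl; auto; lra. Qed.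

Lemma ER_le_trans x y z : ER_le x y -> ER_le y z -> ER_le x z.
Proof. destruct x, y, z; simpl; auto; try lra; tauto. Qed.

Lemma ER_opp_le x y : ER_le x y -> ER_le (ER_opp y) (ER_opp x).
Proof. destruct x, y; simpl; auto; lra. Qed.

Lemma ER_sup_exists S : exists s, ER_is_sup S s.
Proof.
  destruct (classic (S PInf)) as [HP|HP].
  { exists PInf. split. intros x _; destruct x; simpl; auto. intros u Hu. apply Hu; auto. }
  destruct (classic (exists r, S (Fin r))) as [[r0 Hr0]|HF].
  - destruct (classic (bound (fun r => S (Fin r)))) as [Hb|Hb].
    + destruct (completeness (fun r => S (Fin r)) Hb (ex_intro _ r0 Hr0)) as [l [Hl1 Hl2]].
      exists (Fin l). split.
      * intros x Hx; destruct x; simpl; auto.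
      * intros u Hu. destruct u; simpl; auto.
        -- apply Hl2. intros x Hx. exact (Hu (Fin x) Hx).
        -- exact (Hu (Fin r0) Hr0).
    + exists PInf. split. intros x _; destruct x; simpl; auto.
      intros u Hu. destruct u; simpl; auto.
      * apply Hb. exists r. intros x Hx. exact (Hu (Fin x) Hx).
      * exact (Hu (Fin r0) Hr0).
  - exists MInf. split.
    + intros x Hx. destruct x; simpl; auto. apply HF; eauto.
    + intros u _; simpl; auto.
Qed.

Lemma ER_sup_spec S : ER_is_sup S (ER_sup S).
Proof. unfold ER_sup. apply epsilon_spec. apply ER_sup_exists. Qed.

Lemma sup_mono (S T : ER -> Prop) :
  (forall x, S x -> exists y, T y /\ ER_le x y) -> ER_le (ER_sup S) (ER_sup T).
Proof.
  intros H. destruct (ER_sup_spec S) as [_ HS]. destruct (ER_sup_spec T) as [HT _].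
  apply HS. intros x Hx. destruct (H x Hx) as [y [Ty Hle]].
  eapply ER_le_trans; [exact Hle| apply HT; exact Ty].
Qed.

Lemma inf_mono (S T : ER -> Prop) :
  (forall x, S x -> T x) -> ER_le (ER_inf T) (ER_inf S).
Proof.
  intros H. unfold ER_inf. apply ER_opp_le. apply sup_mono.
  intros x Hx. exists x. split; [apply H; exact Hx | apply ER_le_refl].
Qed.

Lemma ve_mono (Y:TVS) (C : vset Y) e A B :
  good_cone Y C -> s_le Y C A B -> le2 (ve Y C e A) (ve Y C e B).
Proof.
  intros HC [HBA HAB].
  assert (Hcone : is_cone Y C) by apply HC.
  assert (Hconv : is_convex Y C) by apply HC.
  unfold le2, ve, Gu; simpl; split; apply ER_opp_le; unfold Gl; apply sup_mono.
  - intros x [b [Bb ->]]. destruct (HBA b Bb) as [a [c [Aa [Cc ->]]]].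
    exists (phi Y C e (sing Y vzero) a). split; [exists a; auto|].
    unfold phi. apply inf_mono. intros x [t [-> H]]. exists t. split; auto.
    destruct H as [p [c1 [Hp [Cc1 ->]]]].
    exists p, (vadd Y c1 c). split; [exact Hp|]. split; [apply Cadd; auto|].
    rewrite vadd_assoc. reflexivity.
  - intros x [b [Hb0 ->]].
    exists (phi Y C e (setopp Y A) b). split; [exists b; auto|].
    unfold phi. apply inf_mono. intros x [t [-> H]]. exists t. split; auto.
    destruct H as [p [c [[u [a' [Hu [Ha' Hp]]]] [Cc Hy]]]].
    destruct (HAB _ Ha') as [b' [c'' [Bb' [Cc'' Heq]]]].
    exists (vadd Y u (vopp Y b')), (vadd Y c (vopp Y c'')). split.
    + exists u, (vopp Y b'). split; [exact Hu|]. split; [|reflexivity].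
      unfold setopp. rewrite opp_opp. exact Bb'.
    + split; [apply Cadd; auto|].
      rewrite Hy, Hp.
      assert (Ha : a' = vadd Y (vopp Y b') (vopp Y c'')).
      { rewrite <- opp_add, <- Heq, opp_opp. reflexivity. }
      rewrite Ha, !vadd_assoc. apply vACl.
Qed.

Lemma s_le_refl (Y:TVS) (C : vset Y) A : good_cone Y C -> s_le Y C A A.
Proof.
  intros HC. split; intros y Hy; exists y, (@vzero Y); split; auto; split.
  - apply C0; auto.
  - rewrite vadd_0; reflexivity.
  - unfold setopp. replace (vopp Y vzero) with (@vzero Y). apply C0; auto.
    apply (vcancel Y vzero). rewrite vadd_opp, vadd_0. reflexivity.
  - rewrite vadd_0; reflexivity.
Qed.

Theorem theorem9 (Y : TVS) (C : vset Y) (X : Type) (F : X -> vset Y) (e : Y) (x0 : X) :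
  good_cone Y C ->
  inhabited X ->
  (forall x, P0 Y C (F x) /\ mpC_closed Y C (F x) /\ mpC_bounded Y C (F x)) ->
  vinterior Y C (vopp Y e) ->
  (forall x y, x <> y -> ve Y C e (F x) <> ve Y C e (F y)) ->
  (vec_maximal (fun x => ve Y C e (F x)) x0 -> s_maximal C F x0) /\
  (vec_minimal (fun x => ve Y C e (F x)) x0 -> s_minimal C F x0).
Proof.
  intros HC _ _ _ Hinj. split.
  - intros Hmax x Hle.
    assert (Hx : x = x0).
    { apply NNPP; intro Hne. apply Hmax. exists x. split.
      apply ve_mono; auto. intro Heq. apply (Hinj x x0 Hne Heq). }
    subst x. apply s_le_refl; auto.
  - intros Hmin x Hle.
    assert (Hx : x = x0).
    { apply NNPP; intro Hne. apply Hmin. exists x. split.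
      apply ve_mono; auto. intro Heq. apply (Hinj x x0 Hne Heq). }
    subst x. apply s_le_refl; auto.
Qed.
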